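(* Let $G$ be a finite simple graph of order $n$ without isolated vertices, with $\gamma_t(G)=2$ and maximum degree $\Delta(G)\le n-2$. Then $$\tau(G)\le \binom{n}{2}-\left\lceil \frac{n}{2}\right\rceil,$$ and this bound is sharp (attained with equality by some such graph).
   Context: A set $D \subseteq V(G)$ is a total dominating set of $G$ if every vertex of $G$ has a neighbor in $D$. $\gamma_t(G)$ is the minimum cardinality of a total dominating set; a minimum one is a $\gamma_t(G)$-set, and $\tau(G)$ is the number of $\gamma_t(G)$-sets. *)

(* Defs.v *)
From mathcomp Require Import all_boot all_order.
Set Implicit Arguments. Unset Strict Implicit. Unset Printing Implicit Defensive.

Definition simple_graph (T : finType) (e : rel T) : Prop :=
  symmetric e /\ irreflexive e.

Definition nbhd (T : finType) (e : rel T) (v : T) : {set T} := [set u | e v u].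
Definition deg (T : finType) (e : rel T) (v : T) : nat := #|nbhd e v|.
Definition max_deg (T : finType) (e : rel T) : nat := \max_(v : T) deg e v.

Definition no_isolated (T : finType) (e : rel T) : Prop :=
  forall v : T, exists u : T, e v u.

Definition total_dominating (T : finType) (e : rel T) (D : {set T}) : bool :=
  [forall v : T, [exists u in D, e v u]].

(* gamma_t(G): minimum cardinality of a total dominating set
   (defaults to #|T| when none exists, which cannot happen without
   isolated vertices) *)
Definition gamma_t (T : finType) (e : rel T) : nat :=
  \big[minn/#|T|]_(D : {set T} | total_dominating e D) #|D|.

Definition tau (T : finType) (e : rel T) : nat :=
  #|[set D : {set T} | total_dominating e D & #|D| == gamma_t e]|.

(* Main.v *)
Require Import Defs.
From mathcomp Require Import all_boot all_order.
From mathcomp Require Import zify.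

Section P.
Variables (T : finType) (e : rel T).

Definition partner (v : T) : T := odflt v [pick w | (w != v) && ~~ e v w].
Definition nonedge (v : T) : {set T} := [set v; partner v].

Lemma partnerP v : no_isolated e -> max_deg e <= #|T| - 2 ->
  partner v != v /\ ~~ e v (partner v).
Proof.
move=> ni md; rewrite /partner; case: pickP => [w /andP[]//|H].
exfalso.
have dv : deg e v <= #|T| - 2 by apply: leq_trans md; apply: leq_bigmax.
have [u evu] := ni v.
have d1 : 0 < deg e v by apply/card_gt0P; exists u; rewrite inE.
have sub : [set: T] \subset [set v] :|: nbhd e v.
  apply/subsetP => w _; rewrite !inE; have := H w; rewrite /=.
  by case: eqP => //= _ /negbFE.
have := subset_leq_card sub; rewrite cardsT.
have := leq_card_setU [set v] (nbhd e v); rewrite cards1 -/(deg e v) => /leqifP; case: ifP => _ H1 H2; [move/eqP: H1 => H1|]; lia.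
Qed.

Lemma part1 : simple_graph e -> no_isolated e -> gamma_t e = 2 ->
     max_deg e <= #|T| - 2 ->
     tau e <= 'C(#|T|, 2) - uphalf #|T|.
Proof.
move=> [sy ir] ni g2 md.
set img := nonedge @: [set: T].
have imgsub : img \subset [set A : {set T} | #|A| == 2].
  apply/subsetP => S /imsetP[v _ ->]; rewrite inE cards2.
  by have [/negPf + _] := partnerP v ni md; rewrite eq_sym => ->.
have cov : cover img = [set: T].
  apply/setP => x; rewrite inE; apply/bigcupP; exists (nonedge x).
    by apply: imset_f. by rewrite !inE eqxx.
have himg : #|T| <= (#|img|).*2.
  have := leq_card_cover img; rewrite cov cardsT => /leqifP; case: ifP => _.
    move/eqP=> ->; apply: eq_leq; rewrite -muln2 -sum_nat_const.
    apply: eq_bigr => S /(subsetP imgsub); rewrite inE => /eqP//.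
  move/ltnW => /leq_trans; apply; apply: eq_leq; rewrite -muln2 -sum_nat_const.
  apply: eq_bigr => S /(subsetP imgsub); rewrite inE => /eqP//.
have tsub : [set D : {set T} | total_dominating e D & #|D| == gamma_t e]
   \subset [set A : {set T} | #|A| == 2] :\: img.
  apply/subsetP => D; rewrite !inE g2 => /andP[td ->]; rewrite andbT.
  apply/negP => /imsetP[v _ Dv].
  move/forallP: td => /(_ v) /existsP[u /andP[]].
  rewrite Dv !inE => /orP[]/eqP->; first by rewrite ir.
  by have [_ /negPf ->] := partnerP v ni md.
rewrite /tau; apply: (leq_trans (subset_leq_card tsub)).
rewrite cardsD (setIidPr imgsub) card_draws.
have : uphalf #|T| <= #|img| by rewrite leq_uphalf_double.
lia.
Qed.
End P.

Definition c4 : rel 'I_4 := fun i j => odd (i + j).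
Definition nxt (i : 'I_4) : 'I_4 := Ordinal (ltn_pmod i.+1 (isT : 0 < 4)).
Definition g (i : 'I_4) : {set 'I_4} := [set i; nxt i].

Lemma c4s : simple_graph c4.
Proof. by split => [i j|i]; rewrite /c4; [rewrite addnC | rewrite addnn odd_double]. Qed.

Lemma td2 (T : finType) (e : rel T) (D : {set T}) (v : T) :
  irreflexive e -> total_dominating e D -> 2 <= #|D|.
Proof.
move=> ir /forallP td.
have /existsP[u /andP[uD _]] := td v.
have /existsP[w /andP[wD euw]] := td u.
have : [set u; w] \subset D by apply/subsetP => x; rewrite !inE => /orP[]/eqP->.
move/subset_leq_card; rewrite cards2; case: eqP => [Euw|//]; by rewrite Euw ir in euw.
Qed.

Lemma gtd i : total_dominating c4 (g i).
Proof.
apply/forallP => v; case: i => [[|[|[|[|//]]]]] ?; case: v => [[|[|[|[|//]]]]] ?;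
 first [ by apply/existsP; exists (Ordinal (isT : 0 < 4)); rewrite !inE
       | by apply/existsP; exists (Ordinal (isT : 1 < 4)); rewrite !inE
       | by apply/existsP; exists (Ordinal (isT : 2 < 4)); rewrite !inE
       | by apply/existsP; exists (Ordinal (isT : 3 < 4)); rewrite !inE ].
Qed.

Lemma ginj : injective g.
Proof.
move=> i j E.
have Hi : i \in g j by rewrite -E !inE eqxx.
have Hj : j \in g i by rewrite E !inE eqxx.
apply: val_inj; move: Hi Hj; rewrite !inE -!val_eqE /=.
have := ltn_ord i; have := ltn_ord j.
by move=> ? ? /orP[]/eqP H1 /orP[]/eqP H2; lia.
Qed.

Lemma gam : gamma_t c4 = 2.
Proof.
apply/eqP; rewrite eqn_leq; apply/andP; split.
  rewrite /gamma_t.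
  have : g ord0 \in index_enum {set 'I_4} by rewrite mem_index_enum.
  elim: (index_enum _) => [//|D r IH]; rewrite inE big_cons => /orP[/eqP<-|/IH H].
    by rewrite gtd cards2 /=; apply: geq_minl.
  by case: ifP => _ //; apply: leq_trans H; apply: geq_minr.
apply: (big_ind (fun m => 2 <= m)) => //; first by rewrite card_ord.
  by move=> x y; rewrite leq_min => -> ->.
move=> D; exact: td2 ord0 (proj2 c4s).
Qed.

Lemma md : max_deg c4 <= 2.
Proof.
apply/bigmax_leqP => v _.
have sub : nbhd c4 v \subset ~: [set v; nxt (nxt v)].
  apply/subsetP => u; rewrite !inE.
  by case: v => [[|[|[|[|//]]]]] ?; case: u => [[|[|[|[|//]]]]] ?.
rewrite /deg; apply: (leq_trans (subset_leq_card sub)).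
rewrite cardsCs setCK cards2 card_ord.
by case: v {sub} => [[|[|[|[|//]]]]] ?.
Qed.

Theorem proposition2p16 :
  (forall (T : finType) (e : rel T),
     simple_graph e -> no_isolated e -> gamma_t e = 2 ->
     max_deg e <= #|T| - 2 ->
     tau e <= 'C(#|T|, 2) - uphalf #|T|)
  /\
  (exists (T : finType) (e : rel T),
     [/\ simple_graph e, no_isolated e, gamma_t e = 2,
         max_deg e <= #|T| - 2 &
         tau e = 'C(#|T|, 2) - uphalf #|T|]).
Proof.
split; first exact: part1.
exists ('I_4 : finType), c4.
have cT : #|'I_4| = 4 by rewrite card_ord.
have hm : max_deg c4 <= #|'I_4| - 2 by rewrite cT; exact: md.
have ni : no_isolated c4.
  by move=> v; exists (nxt v); rewrite /c4 /=; case: v => [[|[|[|[|//]]]]] ?.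
have up := @part1 _ c4 c4s ni gam hm.
split; [exact: c4s|exact: ni|exact: gam|exact: hm|].
apply/eqP; rewrite eqn_leq up /= cT.
have sub : g @: [set: 'I_4] \subset
   [set D : {set 'I_4} | total_dominating c4 D & #|D| == gamma_t c4].
  apply/subsetP => D /imsetP[i _ ->]; rewrite inE gtd gam cards2 /=.
  by case: i => [[|[|[|[|//]]]]] ?.
have := subset_leq_card sub; rewrite card_imset; last exact: ginj.
by rewrite cardsT card_ord.
Qed.
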